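(* Let $N\ge 2$ and let $P=(P_{ij})_{i,j=1}^N$ be the transition matrix of an irreducible Markov chain on $\{1,\dots,N\}$. For each $k$ let $Q^{(k)}=(P_{ij})_{i,j\ne k}$ be obtained from $P$ by deleting its $k$-th row and column, and assume that for every $k$ there is $n_0(k)$ such that all entries of $(Q^{(k)})^n$ are positive for all $n>n_0(k)$. Let $\mu_k$ be the Perron–Frobenius eigenvalue of $Q^{(k)}$, $\lambda_k=-\ln\mu_k$ ($\lambda_k=\infty$ if $\mu_k=0$), and for a probability vector $p\in\Delta_N$ let $M^{(k)}_n(p)=\sum_{i\ne k}\bigl(p^{(k)}(Q^{(k)})^n\bigr)_i$ with $p^{(k)}=(p_i)_{i\ne k}$. Then: (1) If $\lambda_i>\lambda_j$, then for any $p,q\in\Delta_N$ with $q_j<1$ there is $n_0=n_0(p,q)\in\mathbb{N}$ such that $M^{(i)}_n(p)<M^{(j)}_n(q)$ for all $n\ge n_0$. (2) If $\sigma$ is a permutation of $\{1,\dots,N\}$ with $\lambda_{\sigma_N}<\dots<\lambda_{\sigma_1}<\infty$, then for any family $p(1),\dots,p(N)\in\Delta_N$ with $p_i(i)<1$ for all $i$ there is $n_0\in\mathbb{N}$ such that for all $n\ge n_0$, \[ M^{(\sigma_1)}_n(p(\sigma_1))<M^{(\sigma_2)}_n(p(\sigma_2))<\dots<M^{(\sigma_N)}_n(p(\sigma_N)). \] (3) If $i$ is a state with $\lambda_i>\lambda_k$ for all $k\ne i$, then for any $p\in\Delta_N$ and any $k\ne i$ with $p_k<1$ there is $n_0=n_0(p)$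 such that $M^{(i)}_n(p)<M^{(k)}_n(p)$ for all $n\ge n_0$.
   Context: $\Delta_N$ is the simplex of probability distributions on $\{1,\dots,N\}$ (row vectors). $M^{(k)}_n(p)$ is the survival probability up to time $n$ of the chain started from $p$ and killed upon entering state $k$. *)

(* Defs.v *)
From HB Require Import structures.
From mathcomp Require Import all_boot all_order all_algebra.
From mathcomp Require Import all_classical all_reals all_analysis.
From mathcomp Require Import complex.
From mathcomp Require Import fingroup perm.
Set Implicit Arguments. Unset Strict Implicit. Unset Printing Implicit Defensive.
Import Order.TTheory GRing.Theory Num.Theory.
Local Open Scope ring_scope.

Section Defs.
Variable R : realType.

Definition in_simplex (N : nat) (p : 'rV[R]_N) : Prop :=
  (forall i, 0 <= p 0 i) /\ \sum_i p 0 i = 1.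

Definition stochastic (N : nat) (P : 'M[R]_N) : Prop :=
  (forall i j, 0 <= P i j) /\ (forall i, \sum_j P i j = 1).

Definition irreducible (N : nat) (P : 'M[R]_N) : Prop :=
  forall i j, exists m : nat, 0 < (P ^+ m) i j.

Definition Qk (n : nat) (P : 'M[R]_n.+2) (k : 'I_n.+2) : 'M[R]_n.+1 :=
  row' k (col' k P).

Definition ceigen (m : nat) (A : 'M[R]_m) (z : R[i]) : Prop :=
  exists v : 'rV[R[i]]_m, v != 0 /\ v *m map_mx (fun x => (x%:C)%C) A = z *: v.

(* Perron-Frobenius eigenvalue = spectral radius of a nonnegative matrix:
   the largest modulus of a (complex) eigenvalue *)
Definition PF_eigenvalue (m : nat) (A : 'M[R]_m) (mu : R) : Prop :=
  (exists z, ceigen A z /\ Normc.normc z = mu) /\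
  (forall z, ceigen A z -> Normc.normc z <= mu).

Definition lam (mu : R) : \bar R :=
  if mu == 0 then +oo%E else (- ln mu)%:E.

Definition Msurv (n : nat) (P : 'M[R]_n.+2) (k : 'I_n.+2) (t : nat)
  (p : 'rV[R]_n.+2) : R :=
  \sum_j (col' k p *m (Qk P k) ^+ t) 0 j.
End Defs.

(* Main.v *)
Require Import Defs.
From HB Require Import structures.
From mathcomp Require Import all_boot all_order all_algebra.
From mathcomp Require Import all_classical all_reals all_analysis.
From mathcomp Require Import complex.
From mathcomp Require Import fingroup perm.
From mathcomp Require Import lra.
Import Order.TTheory GRing.Theory Num.Theory.
Local Open Scope ring_scope.

Module PFaux.
Local Set Implicit Arguments. Local Unset Strict Implicit.
Import numFieldNormedType.Exports.
Local Open Scope ring_scope.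

Section Helpers.
Variable R : realType.

Lemma le_sum_single (I : finType) (F : I -> R) i0 :
  (forall i, 0 <= F i) -> F i0 <= \sum_i F i.
Proof.
move=> F0; rewrite (bigD1 i0) //= lerDl; apply: sumr_ge0 => i _; exact: F0.
Qed.

Lemma sum_gt0_single (I : finType) (F : I -> R) i0 :
  (forall i, 0 <= F i) -> 0 < F i0 -> 0 < \sum_i F i.
Proof. by move=> F0 Fi0; apply: (lt_le_trans Fi0); apply: le_sum_single. Qed.

Lemma sum_gt0_ex (I : finType) (F : I -> R) :
  0 < \sum_i F i -> exists i, 0 < F i.
Proof.
move=> H; apply/not_existsP => Hn.
have : \sum_i F i <= 0.
  apply: sumr_le0 => i _; rewrite leNgt; apply/negP => Fi; apply: (Hn i) => //.
by rewrite leNgt H.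
Qed.

Lemma unif_lb (I : finType) (F : I -> R) :
  (forall i, 0 < F i) -> exists e, 0 < e /\ forall i, e <= F i.
Proof.
move=> F0; case: (pselect (exists i : I, True)) => [[i0 _]|Hn]; last first.
  by exists 1; split => // i; exfalso; apply: Hn; exists i.
have S0 : 0 < \sum_i (F i)^-1.
  by apply: (@sum_gt0_single _ _ i0) => [i|]; rewrite ?invr_ge0 ?invr_gt0 ?ltW.
exists (\sum_i (F i)^-1)^-1; split; first by rewrite invr_gt0.
move=> i; rewrite -[F i]invrK lef_pV2 ?posrE ?invr_gt0 //.
by apply: le_sum_single => j; rewrite invr_ge0 ltW.
Qed.

Lemma finite_eventually (I : finType) (Pr : I -> nat -> Prop) :
  (forall x, exists n0, forall t, (n0 <= t)%N -> Pr x t) ->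
  exists n0, forall t, (n0 <= t)%N -> forall x, Pr x t.
Proof.
move=> H; have [f Hf] := choice H.
exists (\max_x f x)%N => t Ht x; apply: Hf; apply: leq_trans Ht.
exact: leq_bigmax.
Qed.

Lemma geom_small (rho eps : R) : 0 <= rho < 1 -> 0 < eps ->
  exists n0, forall t, (n0 <= t)%N -> rho ^+ t < eps.
Proof.
move=> /andP[r0 r1] e0.
have := @cvg_expr R rho; rewrite ger0_norm // => /(_ r1) Hc.
have [N _ HN] := cvgr0_norm_lt _ Hc _ e0.
exists N => t Ht; have := HN t Ht; rewrite ger0_norm //; exact: exprn_ge0.
Qed.

End Helpers.


Section Spectral.
Variable R : realType.

Lemma normc_ge0 (z : R[i]) : 0 <= Normc.normc z.
Proof. by case: z => a b /=; rewrite sqrtr_ge0. Qed.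

Lemma normc_real (a : R) : Normc.normc (a%:C)%C = `|a|.
Proof. by rewrite /= expr0n /= addr0 sqrtr_sqr. Qed.

Lemma normc_sum k (F : 'I_k -> R[i]) :
  Normc.normc (\sum_i F i) <= \sum_i Normc.normc (F i).
Proof.
elim/big_rec2: _ => [|i x y _ Hxy]; first by rewrite Normc.normc0.
apply: (le_trans (le_normcD _ _)); exact: lerD.
Qed.

Variable n : nat.
Variable A : 'M[R]_n.+1.
Hypothesis A0 : forall a b, 0 <= A a b.
Variables (r : R) (w : 'cV[R]_n.+1).
Hypothesis r0 : 0 < r.
Hypothesis w0 : forall a, 0 < w a 0.
Hypothesis Aw : A *m w = r *: w.

Lemma r_ceigen : ceigen A (r%:C)%C.
Proof.
have Bw : (A - r%:M) *m w = 0 by rewrite mulmxBl mul_scalar_mx Aw subrr.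
have wT0 : w^T != 0.
  by apply/eqP => H; have := w0 ord0; rewrite -[w]trmxK H trmx0 mxE ltxx.
have BT : w^T *m (A - r%:M)^T = 0.
  by rewrite -trmx_mul Bw trmx0.
have : \det (A - r%:M)^T == 0 by apply/det0P; exists w^T.
rewrite det_tr => /det0P [u u0 uB].
have uA : u *m A = r *: u.
  by apply/eqP; rewrite -subr_eq0 -mul_mx_scalar -mulmxBr uB.
exists (map_mx (fun x => (x%:C)%C) u); split.
  by rewrite map_mx_eq0.
by rewrite -map_mxM uA map_mxZ.
Qed.

Lemma mu_eq (mu : R) : PF_eigenvalue A mu -> mu = r.
Proof.
move=> [[z [[v [v0 vA]] nz]] Hmax].
apply/eqP; rewrite eq_le; apply/andP; split; last first.
  by have := Hmax _ r_ceigen; rewrite normc_real ger0_norm // ltW.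
set a := fun j => Normc.normc (v 0 j).
have Ha j : mu * a j <= \sum_i a i * A i j.
  have := congr1 (fun M : 'M[R[i]]_(1, n.+1) => M 0 j) vA; rewrite !mxE => E.
  rewrite /a -nz -Normc.normcM -E.
  apply: (le_trans (normc_sum _)); apply: ler_sum => i _.
  by rewrite Normc.normcM mxE normc_real ger0_norm.
have Hw i : \sum_j A i j * w j 0 = r * w i 0.
  by have := congr1 (fun M : 'M[R]_(n.+1, 1) => M i 0) Aw; rewrite !mxE.
have [j0 vj0] : exists j, v 0 j != 0.
  apply/not_existsP => Hn; move: v0; apply/negP; rewrite negbK; apply/eqP/rowP => j.
  rewrite mxE; have := Hn j.
  by case: eqP => // -> .
have K0 : 0 < \sum_j a j * w j 0.
  apply: (@sum_gt0_single _ _ _ j0).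
    by move=> j; rewrite mulr_ge0 ?normc_ge0 // ltW.
  rewrite mulr_gt0 // lt_def normc_ge0 andbT.
  by apply/eqP => /Normc.eq0_normc H; move: vj0; rewrite H eqxx.
rewrite -(ler_pM2r K0) mulr_sumr.
apply: (@le_trans _ _ (\sum_j (\sum_i a i * A i j) * w j 0)).
  by apply: ler_sum => j _; rewrite mulrA ler_wpM2r // ltW.
under eq_bigr do rewrite mulr_suml.
rewrite exchange_big /= mulr_sumr; apply: ler_sum => i _.
under eq_bigr do rewrite -mulrA.
by rewrite -mulr_sumr Hw mulrCA.
Qed.

End Spectral.

Section TopoAll.
Local Open Scope classical_set_scope.

Section Topo.
Variable R : realType.

Lemma cont_sum (T : topologicalType) k (F : 'I_k -> T -> R) :
  (forall i, continuous (F i : T -> R)) -> continuous ((fun x => \sum_i F i x) : T -> R).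
Proof.
elim: k F => [|k IH] F HF.
  under eq_fun do rewrite big_ord0. exact: cst_continuous.
under eq_fun do rewrite big_ord_recr /=.
move=> x; apply: continuousD; last exact: HF.
exact: (IH (fun i => F (widen_ord (leqnSn k) i))).
Qed.

Lemma closed_le_fun (T : topologicalType) (f g : T -> R) :
  continuous (f : T -> R) -> continuous (g : T -> R) -> closed [set v | f v <= g v].
Proof.
move=> cf cg.
have -> : [set v | f v <= g v] = (fun v => g v - f v) @^-1` [set x | 0 <= x].
  by rewrite predeqE => v /=; rewrite subr_ge0.
apply: preimage_closed; last exact: closed_ge.
by move=> x _; exact: (continuousB (cg x) (cf x)).
Qed.

Lemma closed_eq_fun (T : topologicalType) (f g : T -> R) :
  continuous (f : T -> R) -> continuous (g : T -> R) -> closed [set v | f v = g v].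
Proof.
move=> cf cg.
have -> : [set v | f v = g v] = (fun v => g v - f v) @^-1` [set x | x = 0].
  rewrite predeqE => v /=; split => H; [by rewrite H subrr| by apply/eqP; rewrite eq_sym -subr_eq0 H].
apply: preimage_closed; last exact: closed_eq.
by move=> x _; exact: (continuousB (cg x) (cf x)).
Qed.

Lemma closed_forall (T : topologicalType) k (P : 'I_k -> set T) :
  (forall i, closed (P i)) -> closed [set v | forall i, P i v].
Proof.
move=> HP.
have -> : [set v | forall i, P i v] = \bigcap_(i in setT) P i.
  by rewrite predeqE => v /=; split => H i //; apply: H.
by apply: closed_bigI => i _; exact: HP.
Qed.

End Topo.


Section PFmax.
Variable R : realType.
Variable m : nat.
Local Notation n := m.+1.
Variable A : 'M[R]_n.
Hypothesis A0 : forall a b, 0 <= A a b.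

Local Notation V := 'rV[R]_(n + 1).
Definition xs (v : V) (i : 'I_n) := v 0 (lshift 1 i).
Definition sv (v : V) := v 0 (rshift n (0 : 'I_1)).
Definition Tot := \sum_i \sum_j A i j.
Definition EE := [set v : V | (forall i, 0 <= xs v i) /\ (\sum_i xs v i = 1) /\
   (0 <= sv v) /\ (sv v <= Tot + 1) /\
   (forall i, sv v * xs v i <= \sum_j A i j * xs v j)].

Lemma Tot_ge0 : 0 <= Tot.
Proof. by apply: sumr_ge0 => i _; apply: sumr_ge0 => j _. Qed.

Lemma xs_cont i : continuous (fun v : V => xs v i).
Proof. exact: coord_continuous. Qed.
Lemma sv_cont : continuous (fun v : V => sv v).
Proof. exact: coord_continuous. Qed.

Lemma EE_closed : closed EE.
Proof.
apply: closedI; first by apply: closed_forall => i; apply: closed_le_fun;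
  [exact: cst_continuous| exact: xs_cont].
apply: closedI.
  by apply: closed_eq_fun; [apply: cont_sum => i; exact: xs_cont|exact: cst_continuous].
apply: closedI; first by apply: closed_le_fun; [exact: cst_continuous| exact: sv_cont].
apply: closedI; first by apply: closed_le_fun; [exact: sv_cont|exact: cst_continuous].
apply: closed_forall => i; apply: closed_le_fun.
  by move=> x; apply: continuousM; [exact: sv_cont|exact: xs_cont].
apply: cont_sum => j x; apply: continuousM; [exact: cst_continuous|exact: xs_cont].
Qed.

Lemma EE_compact : compact EE.
Proof.
have Hb := @rV_compact R (n + 1) (fun _ => `[0, Tot + 1]%classic) (fun _ : 'I_(n + 1) => @segment_compact R 0 (Tot + 1)).
apply: (subclosed_compact EE_closed Hb).
move=> v [x0 [xs1 [s0 [s1 _]]]] /= j; rewrite in_itv /=.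
have -> : j = unsplit (fintype.split j) by rewrite splitK.
case: (fintype.split j) => k /=.
  have := x0 k; rewrite /xs => -> /=.
  have : xs v k <= 1 by rewrite -xs1; apply: le_sum_single => i; exact: x0.
  rewrite /xs => H; apply: (le_trans H); rewrite lerDr; exact: Tot_ge0.
have -> : k = (0 : 'I_1) by apply: val_inj; case: k => -[]. 
by apply/andP; split; [exact: s0|exact: s1].
Qed.


Lemma EE_nonempty : EE !=set0.
Proof.
have n0 : (n%:R : R) != 0 by rewrite pnatr_eq0.
exists (row_mx (\row_(i < n) (n%:R : R)^-1) (0 : 'rV_1)).
rewrite /EE /xs /sv /= row_mxEr mxE.
split; first by move=> i; rewrite row_mxEl mxE invr_ge0 ler0n.
split.
  under eq_bigr do rewrite row_mxEl mxE.
  by rewrite sumr_const card_ord -[LHS]mulr_natl mulfV.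
split; first by rewrite lexx.
split; first by rewrite addr_ge0 ?Tot_ge0.
move=> i; rewrite row_mxEl mxE mul0r; apply: sumr_ge0 => j _.
by rewrite row_mxEl mxE mulr_ge0 // invr_ge0 ler0n.
Qed.

Lemma pos_mul (M : 'M[R]_n) (d : 'cV[R]_n) : (forall a b, 0 < M a b) ->
  (forall j, 0 <= d j 0) -> (exists j, 0 < d j 0) -> forall i, 0 < (M *m d) i 0.
Proof.
move=> Mp d0 [j dj] i; rewrite mxE; apply: (@sum_gt0_single _ _ _ j).
  by move=> k; rewrite mulr_ge0 // ltW.
by rewrite mulr_gt0.
Qed.

Lemma pow_eig (r : R) (w : 'cV[R]_n) : A *m w = r *: w ->
  forall t, A ^+ t *m w = r ^+ t *: w.
Proof.
move=> Aw; elim=> [|t IH]; first by rewrite expr0 mul1mx scale1r.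
by rewrite exprS -mulmxE -mulmxA IH -scalemxAr Aw scalerA -exprSr.
Qed.

Variable t0 : nat.
Hypothesis Apos : forall a b, 0 < (A ^+ t0.+1) a b.

Lemma PF_right : exists r (w : 'cV[R]_n),
  0 < r /\ (forall a, 0 < w a 0) /\ A *m w = r *: w.
Proof.
have cs : {within EE, continuous sv}.
  by apply: continuous_subspaceT => v; exact: sv_cont.
have [c /set_mem Ec cmax] := compact_EVT_max EE_nonempty EE_compact cs.
set r := sv c.
set x : 'cV[R]_n := \col_i xs c i.
have [x0 [xs1 [r0 [rT Hr]]]] := Ec.
have xE i : x i 0 = xs c i by rewrite mxE.
have x0' j : 0 <= x j 0 by rewrite xE.
have xpos : exists j, 0 < x j 0.
  have : 0 < \sum_i xs c i by rewrite xs1.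
  by move=> /sum_gt0_ex [j Hj]; exists j; rewrite xE.
set M := A ^+ t0.+1.
have Hd : A *m x = r *: x.
  apply/eqP; apply: contraT => Hne.
  set d := A *m x - r *: x.
  have d0 j : 0 <= d j 0.
    rewrite /d !mxE subr_ge0; under eq_bigr do rewrite mxE; exact: Hr.
  have dpos : exists j, 0 < d j 0.
    apply/not_existsP => Hn; move: Hne; rewrite -subr_eq0 => /negP; apply.
    apply/eqP/colP => j; rewrite [RHS]mxE; apply/eqP; rewrite eq_le d0 andbT.
    by rewrite leNgt; apply/negP => Hj; apply: (Hn j).
  set y := M *m x.
  have ypos := pos_mul Apos x0' xpos.
  have d'pos := pos_mul Apos d0 dpos.
  have AyE : A *m y - r *: y = M *m d.
    rewrite /y /d mulmxBr scalemxAr mulmxA; congr (_ - _).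
    rewrite mulmxA; congr (_ *m x); rewrite mulmxE; exact: (commrX t0.+1 (commr_refl A)).
  have [e [e0 He]] := @unif_lb R 'I_n (fun i => (M *m d) i 0 / y i 0) (fun i => divr_gt0 (d'pos i) (ypos i)).
  have Hy i : (r + e) * y i 0 <= (A *m y) i 0.
    have := He i; rewrite ler_pdivlMr // => Hi.
    have : (A *m y - r *: y) i 0 = (M *m d) i 0 by rewrite AyE.
    have E1 : (A *m y - r *: y) i 0 = (A *m y) i 0 - r * y i 0 by rewrite !mxE.
    rewrite E1 => Hy; rewrite -Hy in Hi; rewrite mulrDl; lra.
  set S := \sum_i y i 0.
  have S0 : 0 < S by apply: (@sum_gt0_single _ _ _ ord0) => [i|]; rewrite ?ltW.
  set v' : V := row_mx (\row_i (y i 0 / S)) ((r + e)%:M).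
  have xs' i : xs v' i = y i 0 / S by rewrite /xs row_mxEl mxE.
  have sv' : sv v' = r + e by rewrite /sv row_mxEr mxE.
  have yle1 j : y j 0 / S <= 1.
    rewrite ler_pdivrMr // mul1r /S; exact: (@le_sum_single R 'I_n (fun i => y i 0) j (fun i => ltW (ypos i))).

  have Ev' : EE v'.
    rewrite /EE /=; rewrite sv'.
    split; first by move=> i; rewrite xs' divr_ge0 // ltW.
    split; first by under eq_bigr do rewrite xs'; rewrite -mulr_suml mulfV // gt_eqF.
    have Hi i : (r + e) * xs v' i <= \sum_j A i j * xs v' j.
      rewrite xs' mulrA ler_pdivrMr //.
      under eq_bigr do rewrite xs' mulrA.
      rewrite -mulr_suml divfK ?gt_eqF //.
      by apply: (le_trans (Hy i)); rewrite mxE.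
    split; first by rewrite addr_ge0 // ltW.
    split; last exact: Hi.
    suff HT : r + e <= Tot by apply: (le_trans HT); rewrite lerDl.
    apply: (@le_trans _ _ (\sum_i (r + e) * xs v' i)).
      by rewrite -mulr_sumr; under eq_bigr do rewrite xs'; rewrite -mulr_suml mulfV ?gt_eqF // mulr1.
    apply: ler_sum => i _; apply: (le_trans (Hi i)); apply: ler_sum => j _.
    rewrite xs' ler_piMr //; by rewrite yle1.
  have := cmax v' (mem_set Ev'); rewrite sv' -/r.
  move=> H; lra.
have Mx := pow_eig Hd t0.+1.
have Mxpos := pos_mul Apos x0' xpos.
have rpos : 0 < r.
  rewrite lt_def r0 andbT; apply/eqP => r00.
  have [j _] := xpos; have := Mxpos j; rewrite -/M Mx r00 expr0n /= scale0r mxE.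
  by rewrite ltxx.
exists r, x; split => //; split => // a.
have := Mxpos a; rewrite -/M Mx mxE pmulr_rgt0 //; exact: exprn_gt0.
Qed.

End PFmax.

End TopoAll.


Section Growth.
Variable R : realType.
Variable n : nat.
Variable A : 'M[R]_n.+1.
Hypothesis A0 : forall a b, 0 <= A a b.
Variables (r : R) (w : 'cV[R]_n.+1).
Hypothesis r0 : 0 < r.
Hypothesis w0 : forall a, 0 < w a 0.
Hypothesis Aw : A *m w = r *: w.

Lemma pow_nonneg t : forall a b, 0 <= (A ^+ t) a b.
Proof.
elim: t => [|t IH] a b; first by rewrite expr0 mxE ler0n.
rewrite exprS -mulmxE mxE; apply: sumr_ge0 => k _; exact: mulr_ge0.
Qed.

Lemma growth_bounds : exists wl wh : R, 0 < wl /\ 0 < wh /\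
  forall x : 'rV[R]_n.+1, (forall j, 0 <= x 0 j) -> forall t,
    wl * \sum_j (x *m A ^+ t) 0 j <= r ^+ t * \sum_j x 0 j * w j 0 /\
    r ^+ t * \sum_j x 0 j * w j 0 <= wh * \sum_j (x *m A ^+ t) 0 j.
Proof.
have [wl [wl0 Hwl]] := @unif_lb R 'I_n.+1 (fun j => w j 0) w0.
exists wl, (\sum_j w j 0); split => //; split.
  by apply: (@sum_gt0_single _ _ _ ord0) => [j|]; rewrite ?ltW.
move=> x x0 t.
have xA0 j : 0 <= (x *m A ^+ t) 0 j.
  by rewrite mxE; apply: sumr_ge0 => k _; rewrite mulr_ge0 // pow_nonneg.
have key : \sum_j (x *m A ^+ t) 0 j * w j 0 = r ^+ t * \sum_j x 0 j * w j 0.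
  have E : (x *m A ^+ t) *m w = r ^+ t *: (x *m w).
    by rewrite -mulmxA (pow_eig Aw) scalemxAr.
  transitivity (((x *m A ^+ t) *m w) 0 0); first by rewrite [RHS]mxE.
  by rewrite E [LHS]mxE [X in _ * X]mxE.
rewrite -key; split.
  by rewrite mulr_sumr; apply: ler_sum => j _; rewrite [X in _ <= X]mulrC ler_wpM2r.
rewrite mulr_sumr; apply: ler_sum => j _; rewrite [X in X <= _]mulrC; apply: ler_wpM2r => //.
exact: (@le_sum_single R 'I_n.+1 (fun i => w i 0) j (fun i => ltW (w0 i))).
Qed.

End Growth.

Section Key.
Variable R : realType.

Lemma lam_lt (a b : R) : 0 < a -> 0 < b -> (lam b < lam a)%E -> a < b.
Proof.
move=> a0 b0; rewrite /lam !gt_eqF // lte_fin ltrNl opprK => H.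
by rewrite -ltr_ln ?posrE.
Qed.

Lemma col'_pos n (j : 'I_n.+2) (q : 'rV[R]_n.+2) : in_simplex q -> q 0 j < 1 ->
  (forall l, 0 <= (col' j q) 0 l) /\ exists l, 0 < (col' j q) 0 l.
Proof.
move=> [q0 q1] qj; split; first by move=> l; rewrite mxE.
have : 0 < \sum_(l < n.+1) q 0 (lift j l).
  have := q1; rewrite (bigD1_ord j) //= => E; lra.
by move=> /sum_gt0_ex [l Hl]; exists l; rewrite mxE.
Qed.

Variable n : nat.
Variable P : 'M[R]_n.+2.
Variable mu : 'I_n.+2 -> R.
Hypothesis P0 : forall a b, 0 <= P a b.
Hypothesis Hk : forall k, exists r (w : 'cV[R]_n.+1),
  0 < r /\ (forall a, 0 < w a 0) /\ Qk P k *m w = r *: w /\ mu k = r.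

Lemma Q0 k a b : 0 <= Qk P k a b.
Proof. by rewrite /Qk !mxE. Qed.

Lemma mu_pos k : 0 < mu k.
Proof. by have [r [w [r0 [_ [_ ->]]]]] := Hk k. Qed.

Lemma key (i j : 'I_n.+2) : mu i < mu j ->
  forall p q : 'rV[R]_n.+2, in_simplex p -> in_simplex q -> q 0 j < 1 ->
  exists n0 : nat, forall t : nat, (n0 <= t)%N ->
    Msurv P i t p < Msurv P j t q.
Proof.
move=> mij p q [p0 p1] Hq qj.
have [ri [wi [ri0 [wi0 [Awi mui]]]]] := Hk i.
have [rj [wj [rj0 [wj0 [Awj muj]]]]] := Hk j.
have [wli [whi [wli0 [whi0 Bi]]]] := growth_bounds (Q0 i) wi0 Awi.
have [wlj [whj [wlj0 [whj0 Bj]]]] := growth_bounds (Q0 j) wj0 Awj.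
set x := col' i p; set y := col' j q.
have x0 l : 0 <= x 0 l by rewrite mxE.
have [y0 [l yl]] := col'_pos Hq qj.
set ci := \sum_l x 0 l * wi l 0.
set cj := \sum_l y 0 l * wj l 0.
have ci0 : 0 <= ci by apply: sumr_ge0 => k _; rewrite mulr_ge0 // ltW.
have cj0 : 0 < cj.
  apply: (@sum_gt0_single _ _ _ l); first by move=> k; rewrite mulr_ge0 // ltW.
  by rewrite mulr_gt0.
set C := ci / wli.
set D := cj / whj.
have C0 : 0 <= C by rewrite divr_ge0 // ltW.
have D0 : 0 < D by rewrite divr_gt0.
set rho := ri / rj.
have rho01 : 0 <= rho < 1.
  by rewrite divr_ge0 ?ltW //= ltr_pdivrMr // mul1r -mui -muj.
have [N HN] := geom_small rho01 (divr_gt0 D0 (ltr_wpDl C0 ltr01)).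
exists N => t Ht.
have Si : Msurv P i t p <= C * ri ^+ t.
  have [H _] := Bi x x0 t; rewrite /Msurv -/x /C mulrAC ler_pdivlMr //.
  by rewrite mulrC [ci * _]mulrC.
have Sj : D * rj ^+ t <= Msurv P j t q.
  have [_ H] := Bj y y0 t; rewrite /Msurv -/y /D mulrAC ler_pdivrMr //.
  by rewrite [X in X <= _]mulrC [X in _ <= X]mulrC.
apply: (le_lt_trans Si); apply: (lt_le_trans _ Sj).
have rit : ri ^+ t = rho ^+ t * rj ^+ t by rewrite -exprMn divfK // gt_eqF.
have Hr := HN t Ht.
rewrite ltr_pdivlMr ?ltr_wpDl // in Hr.
have rjt : 0 < rj ^+ t by exact: exprn_gt0.
have rhot : 0 <= rho ^+ t by apply: exprn_ge0; case/andP: rho01.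
rewrite rit mulrA ltr_pM2r //.
apply: (le_lt_trans _ Hr); rewrite [X in _ <= X]mulrC; apply: ler_wpM2r => //; lra.
Qed.

End Key.


End PFaux.
Import PFaux.

Theorem corollary1 (R : realType) (n : nat) (P : 'M[R]_n.+2)
  (mu : 'I_n.+2 -> R) :
  stochastic P -> irreducible P ->
  (forall k, exists n0 : nat, forall t : nat, (n0 < t)%N ->
      forall a b, 0 < (Qk P k ^+ t) a b) ->
  (forall k, PF_eigenvalue (Qk P k) (mu k)) ->
  (* (1) *)
  (forall i j : 'I_n.+2, (lam (mu j) < lam (mu i))%E ->
     forall p q : 'rV[R]_n.+2, in_simplex p -> in_simplex q -> q 0 j < 1 ->
     exists n0 : nat, forall t : nat, (n0 <= t)%N ->
       Msurv P i t p < Msurv P j t q)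
  /\
  (* (2) *)
  (forall sigma : 'S_n.+2,
     (forall a b : 'I_n.+2, (a < b)%N ->
        (lam (mu (sigma b)) < lam (mu (sigma a)))%E) ->
     (lam (mu (sigma ord0)) < +oo)%E ->
     forall pf : 'I_n.+2 -> 'rV[R]_n.+2,
       (forall i, in_simplex (pf i)) -> (forall i, pf i 0 i < 1) ->
       exists n0 : nat, forall t : nat, (n0 <= t)%N ->
         forall a b : 'I_n.+2, (a < b)%N ->
           Msurv P (sigma a) t (pf (sigma a)) < Msurv P (sigma b) t (pf (sigma b)))
  /\
  (* (3) *)
  (forall i : 'I_n.+2, (forall k, k != i -> (lam (mu k) < lam (mu i))%E) ->
     forall p : 'rV[R]_n.+2, in_simplex p ->
     forall k, k != i -> p 0 k < 1 ->
       exists n0 : nat, forall t : nat, (n0 <= t)%N ->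
         Msurv P i t p < Msurv P k t p).
Proof.
move=> [P0 _] _ Hprim HPF.
have Hk : forall k, exists r (w : 'cV[R]_n.+1), 0 < r /\ (forall a, 0 < w a 0) /\
    Qk P k *m w = r *: w /\ mu k = r.
  move=> k; have [n0 Hn0] := Hprim k.
  have Apos : forall a b, 0 < (Qk P k ^+ n0.+1) a b by apply: Hn0.
  have [r [w [r0 [w0 Aw]]]] := PF_right (Q0 P0 k) Apos.
  exists r, w; do 3 (split => //); exact: (mu_eq (Q0 P0 k) r0 w0 Aw (HPF k)).
have mp := mu_pos Hk.
have K := key P0 Hk.
split.
  move=> i j Hlam p q Hp Hq qj; apply: (K i j _ p q Hp Hq qj).
  exact: (lam_lt (mp i) (mp j) Hlam).
split.
  move=> sigma Hs _ pf Hpf Hlt.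
  have := @finite_eventually _ (fun ab : 'I_n.+2 * 'I_n.+2 => fun t =>
    (ab.1 < ab.2)%N -> Msurv P (sigma ab.1) t (pf (sigma ab.1)) <
                       Msurv P (sigma ab.2) t (pf (sigma ab.2))).
  case => [[a b]|N HN].
    case: (boolP (a < b)%N) => hab; last by exists 0%N.
    have [n0 H] := K (sigma a) (sigma b) (lam_lt (mp _) (mp _) (Hs a b hab))
      (pf (sigma a)) (pf (sigma b)) (Hpf _) (Hpf _) (Hlt _).
    by exists n0 => t Ht _; apply: H.
  by exists N => t Ht a b hab; exact: (HN t Ht (a, b) hab).
move=> i Hi p Hp k kneq pk; apply: (K i k _ p p Hp Hp pk).
exact: (lam_lt (mp i) (mp k) (Hi k kneq)).
Qed.
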